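(* Let $F$ be an infinite family of index sets linearly ordered by $\subseteq$ such that $I_1\subsetneq I_2$ in $F$ implies $I_2\setminus I_1$ is infinite, and let $(F^-,F^+)$ be a cut of $F$. For $G\subseteq F$ write $\mathcal{T}_G=\{T_I\mid I\in G\}$. Then $\mathrm{Cl}_E(\mathcal{T}_F)$ has the least generating set if and only if both $\mathrm{Cl}_E(\mathcal{T}_{F^-})$ and $\mathrm{Cl}_E(\mathcal{T}_{F^+})$ have least generating sets.
   Context: A predicate symbol $R$ is non-empty for a theory $T$ if $T\vdash\exists\bar x R(\bar x)$, empty otherwise. A complete theory $T$ in a predicate language is language uniform (LU) if for each arity $m$, every permutation of the set of $m$-ary symbols non-empty for $T$ preserves $T$. Let $T_0$ be a complete LU-theory in a relational language $\Sigma_0$, let $n\ge1$, and let $\{R_k\mid k\in I_0\}$, $I_0$ infinite, be the set of $n$-ary symbols of $\Sigma_0$ that are non-empty for $T_0$. Let $\Sigma'=\{R_k\mid k\in I_0\}\cup\{$symbols of $\Sigma_0$ of arity $\neq n\}$. An index set is an infinite $I\subseteq I_0$ with $|I|=|I_0|$ and $|I_0\setminus I|$ equal to the number of $n$-ary symbols of $\Sigma_0$ that are empty for $T_0$. For an index set $I$, $T_I$ is the complete $\Sigma'$-theory axiomatized by the restriction of $T_0$ to the language $\{R_k\mid k\in I\}\cup\{$symbols of arity $\ne n\}$ together with $\{\forall\bar x\neg R_l(\bar x)\mid l\in I_0\setminus I\}$. $E$-closure (over $\Sigma'$): let $E$ be a new binary symbol. The $E$-combination of a family $(\mathcal{A}_i)_i$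 of $\Sigma'$-structures with disjoint universes is the $(\Sigma'\cup\{E\})$-structure on $\bigcup_iA_i$ with $E$ the equivalence relation whose classes are the $A_i$ and each $R\in\Sigma'$ interpreted as $\bigcup_iR^{\mathcal{A}_i}$. For a set $\mathcal{T}$ of complete $\Sigma'$-theories, $\mathrm{Cl}_E(\mathcal{T})$ is the set of complete theories of the $E$-classes (as induced $\Sigma'$-structures) of structures elementarily equivalent to some $E$-combination of structures whose theories lie in $\mathcal{T}$. For an $E$-closed set $\mathcal{C}$, a subset $\mathcal{G}\subseteq\mathcal{C}$ is generating if $\mathrm{Cl}_E(\mathcal{G})=\mathcal{C}$; the least generating set is a generating set with no proper generating subset that is contained in every generating set. A cut of $F$ is a partition $(F^-,F^+)$ of $F$ into nonempty parts such that every element of $F^-$ is properly contained in every element of $F^+$. *)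

(* Defs.v *)
From Stdlib Require Import List Arith.
Import ListNotations.

Set Implicit Arguments.
Unset Strict Implicit.

(* An atom [Rel s f] stands for s(x_{f 0},...,x_{f (ar s - 1)})
   (only the first [ar s] values of [f] matter). *)
Inductive form (S : Type) : Type :=
| Rel : S -> (nat -> nat) -> form S
| Eqv : nat -> nat -> form S
| Neg : form S -> form S
| And : form S -> form S -> form S
| Ex  : nat -> form S -> form S.

Arguments Eqv {S}.

Fixpoint rename (S S' : Type) (g : S -> S') (p : form S) : form S' :=
  match p with
  | Rel s f => Rel (g s) f
  | Eqv x y => Eqv x y
  | Neg q => Neg (rename g q)
  | And q r => And (rename g q) (rename g r)
  | Ex x q => Ex x (rename g q)
  end.

Fixpoint free (S : Type) (ar : S -> nat) (p : form S) (v : nat) : Prop :=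
  match p with
  | Rel s f => exists i, i < ar s /\ f i = v
  | Eqv x y => v = x \/ v = y
  | Neg q => free ar q v
  | And q r => free ar q v \/ free ar r v
  | Ex x q => v <> x /\ free ar q v
  end.

Fixpoint uses (S : Type) (L : S -> Prop) (p : form S) : Prop :=
  match p with
  | Rel s _ => L s
  | Eqv _ _ => True
  | Neg q => uses L q
  | And q r => uses L q /\ uses L r
  | Ex _ q => uses L q
  end.

Definition Sent (S : Type) (ar : S -> nat) (L : S -> Prop) (p : form S) : Prop :=
  (forall v, ~ free ar p v) /\ uses L p.

Fixpoint iterEx (S : Type) (k : nat) (p : form S) : form S :=
  match k with
  | 0 => p
  | S k' => iterEx k' (Ex k' p)
  end.

Definition exR (S : Type) (ar : S -> nat) (s : S) : form S :=
  iterEx (ar s) (Rel s (fun i => i)).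

(* A (nonempty) structure: universe, a distinguished element witnessing
   non-emptiness, and interpretations of the relation symbols (an [ar s]-ary
   symbol is interpreted by its values on lists of length [ar s]). *)
Record structure (S : Type) : Type := Structure {
  dom : Type;
  pt : dom;
  rel : S -> list dom -> Prop }.

Arguments dom {S}.
Arguments pt {S}.
Arguments rel {S}.

Definition upd (D : Type) (env : nat -> D) (x : nat) (d : D) : nat -> D :=
  fun y => if Nat.eqb y x then d else env y.

Fixpoint sat (S : Type) (ar : S -> nat) (M : structure S)
    (env : nat -> dom M) (p : form S) : Prop :=
  match p with
  | Rel s f => rel M s (map (fun i => env (f i)) (seq 0 (ar s)))
  | Eqv x y => env x = env y
  | Neg q => ~ @sat S ar M env q
  | And q r => @sat S ar M env q /\ @sat S ar M env r
  | Ex x q => exists d, @sat S ar M (upd env x d) q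
  end.

Arguments sat {S} ar M env p.

Definition models (S : Type) (ar : S -> nat) (M : structure S) (p : form S) : Prop :=
  forall env, sat ar M env p.

Definition Th (S : Type) (ar : S -> nat) (L : S -> Prop) (M : structure S)
  : form S -> Prop :=
  fun p => Sent ar L p /\ models ar M p.

(* semantic consequence (equivalent to |- by completeness) *)
Definition entails (S : Type) (ar : S -> nat) (G : form S -> Prop) (p : form S) : Prop :=
  forall M : structure S, (forall q, G q -> models ar M q) -> models ar M p.

Definition complete_theory (S : Type) (ar : S -> nat) (L : S -> Prop)
    (T : form S -> Prop) : Prop :=
  (forall p, T p -> Sent ar L p) /\
  (exists M : structure S, forall p, T p -> models ar M p) /\
  (forall p, Sent ar L p -> entails ar T p -> T p) /\
  (forall p, Sent ar L p -> T p \/ T (Neg p)).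

Definition nonempty_for (S : Type) (ar : S -> nat) (T : form S -> Prop) (s : S) : Prop :=
  entails ar T (exR ar s).

Definition bijective (X Y : Type) (f : X -> Y) : Prop :=
  exists g : Y -> X, (forall x, g (f x) = x) /\ (forall y, f (g y) = y).

Definition LU (S : Type) (ar : S -> nat) (T : form S -> Prop) : Prop :=
  forall (m : nat) (sigma : S -> S),
    bijective sigma ->
    (forall s, ~ (ar s = m /\ nonempty_for ar T s) -> sigma s = s) ->
    (forall s, ar s = m /\ nonempty_for ar T s ->
               ar (sigma s) = m /\ nonempty_for ar T (sigma s)) ->
    forall p, T p -> T (rename sigma p).

Definition infinite (X : Type) (P : X -> Prop) : Prop :=
  ~ exists l : list X, forall x, P x -> In x l.

Definition equipotent (X Y : Type) (P : X -> Prop) (Q : Y -> Prop) : Prop :=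
  exists f : {x | P x} -> {y | Q y}, bijective f.

Section Setting.
Variables (S0 : Type) (ar0 : S0 -> nat) (T0 : form S0 -> Prop) (n : nat).

(* I_0: the n-ary symbols non-empty for T0 (we index R_k by k itself) *)
Definition I0 : S0 -> Prop := fun s => ar0 s = n /\ nonempty_for ar0 T0 s.

Definition Sigma' : S0 -> Prop := fun s => ar0 s <> n \/ I0 s.

Definition index_set (I : S0 -> Prop) : Prop :=
  (forall s, I s -> I0 s) /\ infinite I /\ equipotent I I0 /\
  equipotent (fun s => I0 s /\ ~ I s)
             (fun s => ar0 s = n /\ ~ nonempty_for ar0 T0 s).

Definition T_I (I : S0 -> Prop) : form S0 -> Prop :=
  fun p => Sent ar0 Sigma' p /\
    entails ar0 (fun q => (T0 q /\ uses (fun s => ar0 s <> n \/ I s) q) \/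
                          (exists l, I0 l /\ ~ I l /\ q = Neg (exR ar0 l))) p.

Definition T_G (G : (S0 -> Prop) -> Prop) : (form S0 -> Prop) -> Prop :=
  fun T => exists I, G I /\ T = T_I I.

End Setting.

Section Eclosure.
Variables (S : Type) (ar : S -> nat) (L : S -> Prop).

(* the language L u {E}, E = None binary *)
Definition arE : option S -> nat :=
  fun o => match o with None => 2 | Some s => ar s end.
Definition LE : option S -> Prop :=
  fun o => match o with None => True | Some s => L s end.

(* E-combination of a nonempty family (universes made disjoint via sigma) *)
Definition Ecomb (J : Type) (j0 : J) (A : J -> structure S) : structure (option S) :=
  {| dom := {j : J & dom (A j)};
     pt := existT _ j0 (pt (A j0));
     rel := fun o l => match o with
            | None => match l with
                      | [x; y] => projT1 x = projT1 y
                      | _ => False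
                      end
            | Some s => exists j (l' : list (dom (A j))),
                          l = map (existT _ j) l' /\ rel (A j) s l'
            end |}.

Definition elem_equiv (M N : structure (option S)) : Prop :=
  forall p, Sent arE LE p -> (models arE M p <-> models arE N p).

Definition Eclass (N : structure (option S)) (a : dom N) (h : rel N None [a; a])
  : structure S :=
  {| dom := {b : dom N | rel N None [a; b]};
     pt := exist _ a h;
     rel := fun s l => rel N (Some s) (map (@proj1_sig _ _) l) |}.

Definition ClE (TT : (form S -> Prop) -> Prop) : (form S -> Prop) -> Prop :=
  fun T => exists (J : Type) (j0 : J) (A : J -> structure S),
    (forall j, TT (Th ar L (A j))) /\
    exists N : structure (option S),
      elem_equiv N (Ecomb j0 A) /\
      exists (a : dom N) (h : rel N None [a; a]), T = Th ar L (Eclass h).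

Definition subset (X : Type) (A B : X -> Prop) : Prop := forall x, A x -> B x.

Definition generating (C G : (form S -> Prop) -> Prop) : Prop :=
  subset G C /\ ClE G = C.

Definition has_least_gen (C : (form S -> Prop) -> Prop) : Prop :=
  exists G, generating C G /\
    (forall G', generating C G' -> subset G G') /\
    (forall G', generating C G' -> subset G' G -> G' = G).

End Eclosure.

Definition set_incl (X : Type) (I J : X -> Prop) : Prop := forall x, I x -> J x.
Definition proper_incl (X : Type) (I J : X -> Prop) : Prop :=
  set_incl I J /\ ~ set_incl J I.

Definition infinite_family (X : Type) (F : (X -> Prop) -> Prop) : Prop :=
  ~ exists l : list (X -> Prop),
      forall I, F I -> exists J, In J l /\ forall x, I x <-> J x.

Definition linear_family (X : Type) (F : (X -> Prop) -> Prop) : Prop :=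
  forall I J, F I -> F J -> set_incl I J \/ set_incl J I.

Definition infinite_gaps (X : Type) (F : (X -> Prop) -> Prop) : Prop :=
  forall I J, F I -> F J -> proper_incl I J -> infinite (fun x => J x /\ ~ I x).

Definition is_cut (X : Type) (F Fm Fp : (X -> Prop) -> Prop) : Prop :=
  (forall I, F I <-> Fm I \/ Fp I) /\ (forall I, ~ (Fm I /\ Fp I)) /\
  (exists I, Fm I) /\ (exists I, Fp I) /\
  (forall I J, Fm I -> Fp J -> proper_incl I J).

(* Main.v *)
Require Import Defs.
From mathcomp Require ssreflect ssrfun ssrbool classical_sets boolp filter.
Module UF.
Import mathcomp.boot.ssreflect mathcomp.boot.ssrfun mathcomp.boot.ssrbool mathcomp.classical.classical_sets mathcomp.classical.boolp mathcomp.classical.filter.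
Lemma ultra_ext (T : Type) (B : (T -> Prop) -> Prop) (t0 : T)
 (Hne : forall X, B X -> exists x, X x)
 (HI : forall X Y, B X -> B Y -> exists Z, B Z /\ forall x, Z x -> X x /\ Y x) :
 exists U : (T -> Prop) -> Prop, (forall X, B X -> U X) /\
   (forall X Y, U X -> U Y -> U (fun x => X x /\ Y x)) /\
   (forall X Y : T -> Prop, (forall x, X x -> Y x) -> U X -> U Y) /\
   (forall X, U X -> exists x, X x) /\ (forall X, U X \/ U (fun x => ~ X x)).
Proof.
pose F := fun X : set T => (exists Y, B Y /\ forall x, Y x -> X x) \/ (forall x, X x).
have PF : ProperFilter F.
  split.
    case=> [[Y [BY HY]]|H]; first by have [x Yx] := Hne _ BY; exact: (HY x Yx).
    exact: (H t0).
  split.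
  - by right.
  - move=> X Y [[X' [BX HX]]|HX] [[Y' [BY HY]]|HY].
    + have [Z [BZ HZ]] := HI _ _ BX BY; left; exists Z; split => // x /HZ [? ?].
      by split; [apply: HX|apply: HY].
    + by left; exists X'; split => // x Xx; split; [apply: HX|apply: HY].
    + by left; exists Y'; split => // x Yx; split; [apply: HX|apply: HY].
    + by right => x; split.
  - move=> P Q PQ [[Y [BY HY]]|HP]; first by left; exists Y; split => // x /HY /PQ.
    by right => x; apply: PQ.
have [G [UG FG]] := ultraFilterLemma PF.
exists G; split; first by move=> X BX; apply: FG; left; exists X.
split; first by move=> X Y GX GY; exact: (@filterI _ _ _ _ _ GX GY).
split; first by move=> X Y XY GX; exact: (@filterS _ _ _ _ _ XY GX).
split.
  move=> X GX; apply: contrapT => nX.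
  have X0 : X = set0 by rewrite predeqE => x; split => // Xx; apply: nX; exists x.
  by move: GX; rewrite X0; apply: filter_not_empty.
move=> X; exact: (in_ultra_setVsetC X UG).
Qed.
End UF.
Set Bullet Behavior "Strict Subproofs".
Unset Asymmetric Patterns.
From Stdlib Require Import List Arith Lia Classical FunctionalExtensionality PropExtensionality ClassicalEpsilon Eqdep.
Import ListNotations.

Section Gen.
Variables (S : Type) (ar : S -> nat).

Lemma upd_eq (D : Type) (e : nat -> D) x d : upd e x d x = d.
Proof. unfold upd. rewrite Nat.eqb_refl. reflexivity. Qed.
Lemma upd_neq (D : Type) (e : nat -> D) x d v : v <> x -> upd e x d v = e v.
Proof. intros H. unfold upd. destruct (Nat.eqb_spec v x); congruence. Qed.

Lemma sat_env (M : structure S) (p : form S) : forall e1 e2 : nat -> dom M,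
  (forall v, free ar p v -> e1 v = e2 v) -> (sat ar M e1 p <-> sat ar M e2 p).
Proof.
  induction p as [s f|x y|q IH|q IHq r IHr|x q IH]; intros e1 e2 He; simpl in *.
  - replace (map (fun i => e1 (f i)) (seq 0 (ar s))) with (map (fun i => e2 (f i)) (seq 0 (ar s))).
    + tauto.
    + apply map_ext_in. intros i Hi. apply in_seq in Hi. symmetry. apply He. exists i. split; [lia|reflexivity].
  - rewrite (He x (or_introl eq_refl)), (He y (or_intror eq_refl)). tauto.
  - rewrite (IH e1 e2 He). tauto.
  - rewrite (IHq e1 e2 (fun v H => He v (or_introl H))), (IHr e1 e2 (fun v H => He v (or_intror H))). tauto.
  - split; intros [d Hd]; exists d; revert Hd; apply IH; intros v Hv;
      unfold upd; destruct (Nat.eqb_spec v x); auto; symmetry; auto.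
Qed.

Lemma sat_sent (M : structure S) L p e1 e2 : Sent ar L p -> (sat ar M e1 p <-> sat ar M e2 p).
Proof. intros [Hf _]. apply sat_env. intros v Hv. exfalso. exact (Hf v Hv). Qed.

Lemma models_sent (M : structure S) L p e : Sent ar L p -> (models ar M p <-> sat ar M e p).
Proof. intros H. split; intros H1. apply H1. intros e'. apply (sat_sent M L p e e' H). exact H1. Qed.

Lemma models_neg (M : structure S) L p : Sent ar L p -> (models ar M (Neg p) <-> ~ models ar M p).
Proof.
  intros H. assert (H' : Sent ar L (Neg p)) by (destruct H; split; simpl; auto).
  rewrite (models_sent M L _ (fun _ => pt M) H').
  rewrite (models_sent M L _ (fun _ => pt M) H). simpl. tauto.
Qed.

Lemma sent_neg L p : Sent ar L p <-> Sent ar L (Neg p).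
Proof. unfold Sent; simpl; tauto. Qed.
Lemma sent_and L p q : Sent ar L (And p q) <-> Sent ar L p /\ Sent ar L q.
Proof. unfold Sent; simpl. firstorder. Qed.

Definition top : form S := Ex 0 (Eqv 0 0).
Lemma sent_top L : Sent ar L top.
Proof. split; simpl; auto. intros v [H1 [H2|H2]]; congruence. Qed.
Lemma sat_top (M : structure S) e : sat ar M e top.
Proof. simpl. exists (pt M). reflexivity. Qed.

Fixpoint syms (p : form S) : list S :=
  match p with
  | Rel s _ => [s]
  | Eqv _ _ => []
  | Neg q => syms q
  | And q r => syms q ++ syms r
  | Ex _ q => syms q
  end.

Lemma uses_syms P p : uses P p -> forall s, In s (syms p) -> P s.
Proof.
  induction p as [s f|x y|q IH|q IHq r IHr|x q IH]; simpl; intros H s0 Hs.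
  - destruct Hs as [<-|[]]; auto.
  - destruct Hs.
  - eauto.
  - apply in_app_or in Hs. destruct H. destruct Hs; eauto.
  - eauto.
Qed.
Lemma syms_uses (P : S -> Prop) p : (forall s, In s (syms p) -> P s) -> uses P p.
Proof.
  induction p; simpl; intros H; auto.
  split; [apply IHp1|apply IHp2]; intros; apply H; apply in_or_app; auto.
Qed.

Lemma sat_rel (D : Type) (d : D) (r1 r2 : S -> list D -> Prop) p :
  (forall s, In s (syms p) -> forall l, r1 s l <-> r2 s l) ->
  forall e : nat -> D, sat ar (Structure d r1) e p <-> sat ar (Structure d r2) e p.
Proof.
  induction p; simpl; intros H e.
  - apply H. auto.
  - tauto.
  - rewrite IHp; auto; tauto.
  - rewrite IHp1, IHp2; try tauto; intros; apply H; apply in_or_app; auto.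
  - split; intros [x Hx]; exists x; revert Hx; apply IHp; auto.
Qed.

Lemma sat_iterEx (M : structure S) k : forall p e, sat ar M e (iterEx k p) -> exists e', sat ar M e' p.
Proof.
  induction k; simpl; intros p e H; eauto.
  destruct (IHk _ _ H) as [e' [d Hd]]. eauto.
Qed.

Lemma sat_iterEx_intro (M : structure S) k : forall p e (g : nat -> dom M),
  sat ar M (fun v => if v <? k then g v else e v) p -> sat ar M e (iterEx k p).
Proof.
  induction k; simpl; intros p e g H.
  - revert H. apply sat_env. reflexivity.
  - apply (IHk _ e g). simpl. exists (g k). revert H. apply sat_env. intros v _.
    unfold upd. destruct (Nat.eqb_spec v k).
    + subst. rewrite (proj2 (Nat.ltb_lt k (Datatypes.S k))); auto.
    + destruct (Nat.ltb_spec v k); destruct (Nat.ltb_spec v (Datatypes.S k)); auto; lia.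
Qed.

Lemma sat_exR (M : structure S) e s : sat ar M e (exR ar s) -> exists l, rel M s l.
Proof. unfold exR. intros H. destruct (sat_iterEx _ _ _ _ H) as [e' H']. simpl in H'. eauto. Qed.

Lemma sat_exR_intro (M : structure S) e s (g : nat -> dom M) :
  rel M s (map g (seq 0 (ar s))) -> sat ar M e (exR ar s).
Proof.
  intros H. unfold exR. apply (sat_iterEx_intro M (ar s) _ e g). simpl.
  erewrite map_ext_in; [exact H|]. intros i Hi. apply in_seq in Hi.
  simpl. destruct (Nat.ltb_spec i (ar s)); auto; lia.
Qed.

Lemma free_iterEx k : forall p v, free ar (iterEx k p) v -> free ar p v /\ k <= v.
Proof.
  induction k; simpl; intros p v H.
  - split; auto; lia.
  - destruct (IHk _ _ H) as [[H1 H2] H3]. split; auto. lia.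
Qed.

Lemma sent_exR (L : S -> Prop) s : L s -> Sent ar L (exR ar s).
Proof.
  intros Hs. split.
  - intros v Hv. apply free_iterEx in Hv. destruct Hv as [[i [Hi Hv]] Hk]. lia.
  - unfold exR. assert (forall k p, uses L p -> uses L (iterEx k p)).
    { induction k; simpl; auto. }
    apply H. exact Hs.
Qed.


Fixpoint bnd (p : form S) (v : nat) : Prop :=
  match p with
  | Neg q => bnd q v
  | And q r => bnd q v \/ bnd r v
  | Ex x q => v = x \/ bnd q v
  | _ => False
  end.
Fixpoint maxb (p : form S) : nat :=
  match p with
  | Neg q => maxb q
  | And q r => Nat.max (maxb q) (maxb r)
  | Ex x q => Nat.max x (maxb q)
  | _ => 0
  end.
Lemma bnd_le p v : bnd p v -> v <= maxb p.
Proof.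
  induction p; simpl; intros H; try tauto.
  - destruct H as [H|H]; [apply IHp1 in H|apply IHp2 in H]; lia.
  - destruct H as [->|H]; [|apply IHp in H]; lia.
Qed.
Definition fresh (p : form S) : nat := Datatypes.S (maxb p).
Lemma fresh_nb p : ~ bnd p (fresh p).
Proof. intros H. apply bnd_le in H. unfold fresh in H. lia. Qed.

Fixpoint relv (c : nat) (p : form S) : form (option S) :=
  match p with
  | Rel s f => Rel (Some s) f
  | Eqv x y => Eqv x y
  | Neg q => Neg (relv c q)
  | And q r => And (relv c q) (relv c r)
  | Ex x q => Ex x (And (Rel None (fun i => if i =? 0 then c else x)) (relv c q))
  end.

Lemma relv_uses (L : S -> Prop) c p : uses L p -> uses (LE L) (relv c p).
Proof. induction p; simpl; tauto. Qed.

Lemma relv_free c p v : free (arE ar) (relv c p) v -> v = c \/ free ar p v.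
Proof.
  induction p as [s f|x y|q IH|q IHq r IHr|x q IH]; simpl; intros H.
  - right. exact H.
  - right. exact H.
  - auto.
  - destruct H as [H|H]; [destruct (IHq H)|destruct (IHr H)]; auto.
  - destruct H as [Hx [[i [Hi Hv]]|H]].
    + destruct i as [|[|i]]; simpl in Hv; auto; [congruence|lia].
    + destruct (IH H); auto.
Qed.

Lemma sent_relv (L : S -> Prop) p : Sent ar L p -> Sent (arE ar) (LE L) (Ex (fresh p) (relv (fresh p) p)).
Proof.
  intros [Hf Hu]. split.
  - simpl. intros v [Hv H]. destruct (relv_free _ _ _ H); [congruence|exact (Hf v H0)].
  - simpl. apply relv_uses. exact Hu.
Qed.

Lemma sig_inj (A : Type) (P : A -> Prop) (u w : {x | P x}) : proj1_sig u = proj1_sig w -> u = w.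
Proof. destruct u, w; simpl; intros ->. f_equal. apply proof_irrelevance. Qed.

Lemma relv_class (N : structure (option S)) (a : dom N) (h : rel N None [a;a]) c p :
  ~ bnd p c -> ~ free ar p c -> forall (env : nat -> dom (Eclass h)) (e : nat -> dom N),
  e c = a -> (forall v, free ar p v -> e v = proj1_sig (env v)) ->
  (sat ar (Eclass h) env p <-> sat (arE ar) N e (relv c p)).
Proof.
  induction p as [s f|x y|q IH|q IHq r IHr|x q IH]; simpl; intros Hb Hf env e Hc He.
  - rewrite map_map. erewrite map_ext_in; [reflexivity|].
    intros i Hi. apply in_seq in Hi. symmetry. apply He. exists i. split; [lia|auto].
  - rewrite (He x (or_introl eq_refl)), (He y (or_intror eq_refl)).
    split; [intros ->; auto|apply sig_inj].
  - rewrite (IH Hb Hf env e Hc He). tauto.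
  - rewrite (IHq (fun H => Hb (or_introl H)) (fun H => Hf (or_introl H)) env e Hc (fun v H => He v (or_introl H))).
    rewrite (IHr (fun H => Hb (or_intror H)) (fun H => Hf (or_intror H)) env e Hc (fun v H => He v (or_intror H))).
    tauto.
  - assert (Hcx : c <> x) by tauto.
    assert (Hbq : ~ bnd q c) by tauto.
    assert (Hfq : ~ free ar q c) by (intros H; apply Hf; auto).
    split.
    + intros [d Hd]. exists (proj1_sig d). simpl. rewrite upd_neq by auto. rewrite upd_eq. rewrite Hc.
      split; [exact (proj2_sig d)|].
      refine (proj1 (IH Hbq Hfq (upd env x d) (upd e x (proj1_sig d)) _ _) Hd); [rewrite upd_neq; auto|].
      intros v Hv. unfold upd. destruct (Nat.eqb_spec v x); auto.
    + intros [b [Hb1 Hd]]. simpl in Hb1. rewrite upd_neq in Hb1 by auto. rewrite upd_eq in Hb1. rewrite Hc in Hb1.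
      exists (exist _ b Hb1).
      refine (proj2 (IH Hbq Hfq (upd env x (exist _ b Hb1)) (upd e x b) _ _) Hd); [rewrite upd_neq; auto|].
      intros v Hv. unfold upd. destruct (Nat.eqb_spec v x); auto.
Qed.

Lemma map_existT_len (J : Type) (P : J -> Type) j j' (l1 : list (P j)) (l2 : list (P j')) :
  map (existT P j) l1 = map (existT P j') l2 -> length l1 = length l2.
Proof. intros H. rewrite <- (length_map (existT P j) l1), <- (length_map (existT P j') l2), H. reflexivity. Qed.

Lemma map_existT_idx (J : Type) (P : J -> Type) j j' (l1 : list (P j)) (l2 : list (P j')) :
  map (existT P j) l1 = map (existT P j') l2 -> l1 <> [] -> j = j'.
Proof.
  destruct l1 as [|x l1]; [tauto|]. destruct l2 as [|y l2]; simpl; [discriminate|].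
  intros H _. inversion H. assumption.
Qed.

Lemma map_existT_inj (J : Type) (P : J -> Type) j : forall (l1 l2 : list (P j)),
  map (existT P j) l1 = map (existT P j) l2 -> l1 = l2.
Proof.
  induction l1 as [|x l1 IH]; destruct l2 as [|y l2]; simpl; try discriminate; auto.
  intros H. injection H. intros H2 H1. apply inj_pair2 in H1. subst. f_equal. auto.
Qed.

Lemma ecomb_rel (L : S -> Prop) (J : Type) (j0 : J) (A : J -> structure S)
  (NA : forall j j' s, L s -> ar s = 0 -> rel (A j) s [] -> rel (A j') s []) p c :
  uses L p -> ~ bnd p c -> ~ free ar p c ->
  forall j (env : nat -> dom (A j)) (e : nat -> dom (Ecomb j0 A)),
  projT1 (e c) = j -> (forall v, free ar p v -> e v = existT _ j (env v)) ->
  (sat ar (A j) env p <-> sat (arE ar) (Ecomb j0 A) e (relv c p)).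
Proof.
  induction p as [s f|x y|q IH|q IHq r IHr|x q IH]; simpl; intros Hu Hb Hf j env e Hc He.
  - assert (Hm : map (fun i => e (f i)) (seq 0 (ar s)) = map (existT (fun j => dom (A j)) j) (map (fun i => env (f i)) (seq 0 (ar s)))).
    { rewrite map_map. apply map_ext_in. intros i Hi. apply in_seq in Hi. apply He. exists i. split; [lia|auto]. }
    rewrite Hm. split.
    + intros H. exists j, (map (fun i => env (f i)) (seq 0 (ar s))). split; auto.
    + intros [j' [l' [H1 H2]]].
      destruct (map (fun i => env (f i)) (seq 0 (ar s))) as [|z zs] eqn:E.
      * assert (l' = []) by (apply (map_existT_len J (fun j => dom (A j))) in H1; destruct l'; simpl in *; congruence). subst l'.
        apply (NA j' j s Hu); auto. apply (f_equal (@length _)) in E. rewrite length_map, length_seq in E. exact E.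
      * assert (j = j') by (apply (map_existT_idx J (fun j => dom (A j)) _ _ _ _ H1); discriminate). subst j'.
        apply (map_existT_inj J (fun j => dom (A j))) in H1. subst l'. exact H2.
  - rewrite (He x (or_introl eq_refl)), (He y (or_intror eq_refl)).
    split; [intros ->; auto|intros H; apply inj_pair2 in H; exact H].
  - rewrite (IH Hu Hb Hf j env e Hc He). tauto.
  - destruct Hu as [Hu1 Hu2].
    rewrite (IHq Hu1 (fun H => Hb (or_introl H)) (fun H => Hf (or_introl H)) j env e Hc (fun v H => He v (or_introl H))).
    rewrite (IHr Hu2 (fun H => Hb (or_intror H)) (fun H => Hf (or_intror H)) j env e Hc (fun v H => He v (or_intror H))).
    tauto.
  - assert (Hcx : c <> x) by tauto.
    assert (Hbq : ~ bnd q c) by tauto.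
    assert (Hfq : ~ free ar q c) by (intros H; apply Hf; auto).
    split.
    + intros [d Hd]. exists (existT _ j d). simpl. rewrite upd_neq by auto. rewrite upd_eq.
      split; [simpl; exact Hc|].
      refine (proj1 (IH Hu Hbq Hfq j (upd env x d) (upd e x (existT _ j d)) _ _) Hd); [rewrite upd_neq; auto|].
      intros v Hv. unfold upd. destruct (Nat.eqb_spec v x); auto.
    + intros [b [Hb1 Hd]]. simpl in Hb1. rewrite upd_neq in Hb1 by auto. rewrite upd_eq in Hb1. rewrite Hc in Hb1.
      destruct b as [j' y]. simpl in Hb1. subst j'.
      exists y.
      refine (proj2 (IH Hu Hbq Hfq j (upd env x y) (upd e x (existT _ j y)) _ _) Hd); [rewrite upd_neq; auto|].
      intros v Hv. unfold upd. destruct (Nat.eqb_spec v x); auto.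
Qed.
End Gen.

Section Ultra.
Variables (S : Type) (ar : S -> nat) (M : structure S) (J : Type) (U : (J -> Prop) -> Prop).
Hypotheses (UI : forall X Y, U X -> U Y -> U (fun x => X x /\ Y x))
  (US : forall X Y : J -> Prop, (forall x, X x -> Y x) -> U X -> U Y)
  (Une : forall X, U X -> exists x, X x)
  (Ud : forall X, U X \/ U (fun x => ~ X x)).

Lemma UT : U (fun _ => True).
Proof. destruct (Ud (fun _ => True)) as [H|H]; [exact H|]. apply (US _ _ (fun x _ => I) H). Qed.

Lemma Ucst (P : Prop) : U (fun _ => P) <-> P.
Proof. split. intros H. destruct (Une _ H); auto. intros H. apply (US _ _ (fun _ _ => H) UT). Qed.

Lemma U_neg X : U (fun x => ~ X x) <-> ~ U X.
Proof.
  split.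
  - intros H1 H2. destruct (Une _ (UI _ _ H1 H2)) as [x [Hx1 Hx2]]. auto.
  - intros H. destruct (Ud X); tauto.
Qed.

Definition ueq (f g : J -> dom M) : Prop := U (fun k => f k = g k).
Lemma ueq_refl f : ueq f f.
Proof. unfold ueq. apply (US _ _ (fun x _ => eq_refl) UT). Qed.
Lemma ueq_sym f g : ueq f g -> ueq g f.
Proof. unfold ueq. apply US. auto. Qed.
Lemma ueq_trans f g h : ueq f g -> ueq g h -> ueq f h.
Proof. unfold ueq. intros H1 H2. apply (US _ _ (fun x H => eq_trans (proj1 H) (proj2 H)) (UI _ _ H1 H2)). Qed.

Definition UD : Type := {P : (J -> dom M) -> Prop | exists f, P = ueq f}.
Definition ucls (f : J -> dom M) : UD := exist _ (ueq f) (ex_intro _ f eq_refl).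
Definition urep (a : UD) : J -> dom M := proj1_sig (constructive_indefinite_description _ (proj2_sig a)).
Lemma urep_spec a : proj1_sig a = ueq (urep a).
Proof. unfold urep. destruct (constructive_indefinite_description _ _). simpl. exact e. Qed.

Lemma ucls_eq f g : ucls f = ucls g <-> ueq f g.
Proof.
  split.
  - intros H. apply (f_equal (@proj1_sig _ _)) in H. simpl in H.
    assert (H1 := ueq_refl g). rewrite <- H in H1. exact H1.
  - intros H. apply sig_inj. simpl. apply functional_extensionality. intros h.
    apply propositional_extensionality. split; intros H1.
    + exact (ueq_trans _ _ _ (ueq_sym _ _ H) H1).
    + exact (ueq_trans _ _ _ H H1).
Qed.

Lemma ucls_rep a : ucls (urep a) = a.
Proof. apply sig_inj. simpl. symmetry. apply urep_spec. Qed.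

Lemma urep_cls f : ueq (urep (ucls f)) f.
Proof. apply ucls_eq. apply ucls_rep. Qed.

Lemma ud_eq (a b : UD) : a = b <-> ueq (urep a) (urep b).
Proof. rewrite <- ucls_eq. rewrite !ucls_rep. tauto. Qed.

Definition Ult : structure S :=
  {| dom := UD; pt := ucls (fun _ => pt M);
     rel := fun s l => U (fun k => rel M s (map (fun a => urep a k) l)) |}.

Lemma los p : forall env : nat -> dom Ult,
  sat ar Ult env p <-> U (fun k => sat ar M (fun v => urep (env v) k) p).
Proof.
  induction p as [s f|x y|q IH|q IHq r IHr|x q IH]; intros env; simpl.
  - match goal with |- U ?F <-> U ?G => replace F with G; [tauto|] end.
    apply functional_extensionality. intros k. rewrite map_map. reflexivity.
  - apply ud_eq.
  - rewrite IH. rewrite U_neg. tauto.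
  - rewrite IHq, IHr. split.
    + intros [H1 H2]. exact (UI _ _ H1 H2).
    + intros H. split; [exact (US _ _ (fun x H => proj1 H) H)|exact (US _ _ (fun x H => proj2 H) H)].
  - assert (Hupd : forall d k, (fun v => urep (upd env x d v) k) = upd (fun v => urep (env v) k) x (urep d k)).
    { intros d k. apply functional_extensionality. intros v. unfold upd. destruct (v =? x); reflexivity. }
    split.
    + intros [d Hd]. rewrite IH in Hd. revert Hd. apply US. intros k Hk. exists (urep d k).
      rewrite <- Hupd. exact Hk.
    + intros H.
      pose (g := fun k => epsilon (inhabits (pt M)) (fun m => sat ar M (upd (fun v => urep (env v) k) x m) q)).
      exists (ucls g). rewrite IH.
      assert (H2 := UI _ _ H (urep_cls g)). revert H2. apply US. intros k [Hk1 Hk2].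
      rewrite Hupd. rewrite Hk2. unfold g. apply epsilon_spec. exact Hk1.
Qed.

Lemma ult_equiv (L : S -> Prop) p : Sent ar L p -> (models ar Ult p <-> models ar M p).
Proof.
  intros H. rewrite (models_sent S ar Ult L p (fun _ => pt Ult) H).
  rewrite los.
  match goal with |- U ?F <-> _ => replace F with (fun _ : J => models ar M p); [apply Ucst|] end.
  apply functional_extensionality. intros k. apply propositional_extensionality.
  rewrite (models_sent S ar M L p (fun _ => urep (pt Ult) k) H). reflexivity.
Qed.
End Ultra.

Section Char.
Variables (S : Type) (ar : S -> nat) (L : S -> Prop) (Z : S -> Prop).

Definition NAs (A : structure S) : Prop := forall s, L s -> ar s = 0 -> (rel A s [] <-> Z s).
Definition good (T : form S -> Prop) : Prop := exists A, T = Th ar L A /\ NAs A.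
Definition cl (G : (form S -> Prop) -> Prop) (T : form S -> Prop) : Prop :=
  good T /\ forall p, T p -> exists T', G T' /\ T' p.

Lemma Th_and (A : structure S) p q : Th ar L A (And p q) <-> Th ar L A p /\ Th ar L A q.
Proof.
  unfold Th, models. rewrite sent_and. simpl. firstorder.
Qed.

Lemma Th_compl (A : structure S) p : Sent ar L p -> Th ar L A p \/ Th ar L A (Neg p).
Proof.
  intros H. unfold Th. rewrite <- sent_neg. rewrite (models_neg S ar A L p H). tauto.
Qed.

Lemma Th_cons (A : structure S) p : Th ar L A p -> Th ar L A (Neg p) -> False.
Proof.
  intros [H1 H2] [_ H3]. apply (models_neg S ar A L p H1) in H3. tauto.
Qed.

Lemma Th_top (A : structure S) : Th ar L A (top S).
Proof. split. apply sent_top. intros e. apply sat_top. Qed.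

Lemma good_sent T p : good T -> T p -> Sent ar L p.
Proof. intros [A [-> _]] [H _]. exact H. Qed.
Lemma good_and T p q : good T -> (T (And p q) <-> T p /\ T q).
Proof. intros [A [-> _]]. apply Th_and. Qed.
Lemma good_compl T p : good T -> Sent ar L p -> T p \/ T (Neg p).
Proof. intros [A [-> _]]. apply Th_compl. Qed.
Lemma good_cons T p : good T -> T p -> T (Neg p) -> False.
Proof. intros [A [-> _]]. apply Th_cons. Qed.
Lemma good_top T : good T -> T (top S).
Proof. intros [A [-> _]]. apply Th_top. Qed.

Lemma good_sep T T' : good T -> good T' -> T <> T' -> exists p, T p /\ ~ T' p.
Proof.
  intros HT HT' Hne. apply NNPP. intros H. apply Hne.
  apply functional_extensionality. intros p. apply propositional_extensionality. split.
  - intros Hp. apply NNPP. intros Hn. apply H. eauto.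
  - intros Hp. apply NNPP. intros Hn.
    destruct (good_compl T p HT (good_sent T' p HT' Hp)) as [H1|H1]; [tauto|].
    apply (good_cons T' p HT' Hp). apply NNPP. intros Hn2. apply H. eauto.
Qed.

Lemma rel0_models (A : structure S) s : ar s = 0 -> (models ar A (Rel s (fun i => i)) <-> rel A s []).
Proof.
  intros H. unfold models. simpl. rewrite H. simpl. split; [intros H1; exact (H1 (fun _ => pt A))|intros H1 _; exact H1].
Qed.

Lemma sent_rel0 s : L s -> ar s = 0 -> Sent ar L (Rel s (fun i => i)).
Proof. intros H1 H2. split; simpl; auto. intros v [i [Hi _]]. lia. Qed.

Lemma NAs_Th (A B : structure S) : Th ar L A = Th ar L B -> NAs B -> NAs A.
Proof.
  intros HE HB s Hs H0. rewrite <- (HB s Hs H0).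
  rewrite <- (rel0_models A s H0), <- (rel0_models B s H0).
  assert (Hs' := sent_rel0 s Hs H0).
  split; intros H.
  - assert (Th ar L B (Rel s (fun i => i))) by (rewrite <- HE; split; auto). apply H1.
  - assert (Th ar L A (Rel s (fun i => i))) by (rewrite HE; split; auto). apply H1.
Qed.

Theorem ClE_char (TT : (form S -> Prop) -> Prop) : (forall T, TT T -> good T) ->
  forall T, ClE ar L TT T <-> cl TT T.
Proof.
  intros Hgood T. split.
  - intros [J [j0 [A [HA [N [Heq [a [h ->]]]]]]]].
    assert (NA : forall j, NAs (A j)).
    { intros j. destruct (Hgood _ (HA j)) as [B [HB NB]]. exact (NAs_Th _ _ HB NB). }
    split.
    + exists (Eclass h). split; [reflexivity|]. intros s Ls H0. simpl.
      assert (HS : Sent (arE ar) (LE L) (Rel (Some s) (fun i => i))).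
      { split; simpl; auto. intros v [i [Hi _]]. lia. }
      assert (E1 : models (arE ar) N (Rel (Some s) (fun i => i)) <-> rel N (Some s) []).
      { unfold models. simpl. rewrite H0. simpl. split; [intros H1; exact (H1 (fun _ => a))|intros H1 _; exact H1]. }
      rewrite <- E1. rewrite (Heq _ HS). unfold models. simpl. rewrite H0. simpl. split.
      * intros H. destruct (H (fun _ => existT _ j0 (pt (A j0)))) as [j [l' [H1 H2]]].
        destruct l'; [|discriminate]. apply (NA j s Ls H0). exact H2.
      * intros Hz e. exists j0, []. split; auto. apply (NA j0 s Ls H0). exact Hz.
    + intros p [Hs Hm].
      set (c := fresh S p).
      assert (HS := sent_relv S ar L p Hs). fold c in HS.
      assert (HN : models (arE ar) N (Ex c (relv S c p))).
      { rewrite (models_sent _ _ N _ _ (fun _ => a) HS). simpl. exists a.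
        refine (proj1 (relv_class S ar N a h c p (fresh_nb S ar p) _ (fun _ => exist _ a h) _ _ _) _).
        - intros Hf. exact (proj1 Hs c Hf).
        - apply upd_eq.
        - intros v Hv. exfalso. exact (proj1 Hs v Hv).
        - apply Hm. }
      apply (Heq _ HS) in HN.
      destruct (HN (fun _ => existT _ j0 (pt (A j0)))) as [[j x] Hd].
      assert (HNA : forall j j' s, L s -> ar s = 0 -> rel (A j) s [] -> rel (A j') s []).
      { intros j1 j2 s Ls H0 H1. apply (NA j2 s Ls H0). apply (NA j1 s Ls H0). exact H1. }
      assert (Hp : sat ar (A j) (fun _ => x) p).
      { refine (proj2 (ecomb_rel S ar L J j0 A HNA p c (proj2 Hs) (fresh_nb S ar p) _ j (fun _ => x) _ _ _) Hd).
        - intros Hf. exact (proj1 Hs c Hf).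
        - rewrite upd_eq. reflexivity.
        - intros v Hv. exfalso. exact (proj1 Hs v Hv). }
      exists (Th ar L (A j)). split; [apply HA|]. split; [exact Hs|].
      apply (models_sent _ _ _ _ _ (fun _ => x) Hs). exact Hp.
  - intros [[B [-> NB]] Hcl].
    destruct (Hcl (top S) (Th_top B)) as [T1 [HT1 _]].
    set (J := {T' : form S -> Prop | TT T'}).
    assert (HgA : forall j : J, {A : structure S | proj1_sig j = Th ar L A /\ NAs A}).
    { intros j. apply constructive_indefinite_description. apply Hgood. exact (proj2_sig j). }
    set (A := fun j => proj1_sig (HgA j)).
    assert (HAj : forall j, proj1_sig j = Th ar L (A j) /\ NAs (A j)).
    { intros j. unfold A. exact (proj2_sig (HgA j)). }
    set (j0 := (exist _ T1 HT1 : J)).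
    assert (HNA : forall j j' s, L s -> ar s = 0 -> rel (A j) s [] -> rel (A j') s []).
    { intros j1 j2 s Ls H0 H1. apply (proj2 (HAj j2) s Ls H0). apply (proj2 (HAj j1) s Ls H0). exact H1. }
    set (Bs := fun X : J -> Prop => exists p, Th ar L B p /\ X = (fun k : J => proj1_sig k p)).
    assert (Hk : forall (k : J) p, proj1_sig k p -> Th ar L (A k) p).
    { intros k p H. rewrite <- (proj1 (HAj k)). exact H. }
    assert (Hne : forall X, Bs X -> exists x, X x).
    { intros X [p [Hp ->]]. destruct (Hcl p Hp) as [T' [HT' HT'p]]. exists (exist _ T' HT'). exact HT'p. }
    assert (HI : forall X Y, Bs X -> Bs Y -> exists W, Bs W /\ forall x, W x -> X x /\ Y x).
    { intros X Y [p [Hp ->]] [q [Hq ->]]. exists (fun k : J => proj1_sig k (And p q)). split.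
      - exists (And p q). split; auto. apply Th_and. auto.
      - intros k Hkk. rewrite (proj1 (HAj k)) in *. apply Th_and. exact Hkk. }
    destruct (UF.ultra_ext J Bs j0 Hne HI) as [U [HUB [UI [US [Une Ud]]]]].
    set (Nu := Ult (option S) (Ecomb j0 A) J U).
    set (a := ucls (option S) (Ecomb j0 A) J U (fun k => existT _ k (pt (A k))) : dom Nu).
    assert (h : rel Nu None [a; a]).
    { simpl. apply (US (fun _ => True)); [|exact (UT J U US Ud)]. intros k _. simpl. reflexivity. }
    assert (KEY : forall p, Th ar L B p -> models ar (Eclass h) p).
    { intros p Hp. destruct Hp as [Hs Hm]. intros env.
      set (c := fresh S p).
      refine (proj2 (relv_class S ar Nu a h c p (fresh_nb S ar p) _ env (fun _ => a) eq_refl _) _).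
      - intros Hf. exact (proj1 Hs c Hf).
      - intros v Hv. exfalso. exact (proj1 Hs v Hv).
      - apply (los (option S) (arE ar) (Ecomb j0 A) J U UI US Une Ud).
        assert (H1 : U (fun k : J => proj1_sig k p)) by (apply HUB; exists p; split; [split|]; auto).
        assert (H2 := urep_cls (option S) (Ecomb j0 A) J U UI US Ud (fun k => existT _ k (pt (A k)))).
        unfold ueq in H2. fold a in H2.
        apply (US (fun k => proj1_sig k p /\ urep (option S) (Ecomb j0 A) J U a k = existT _ k (pt (A k)))); [|exact (UI _ _ H1 H2)].
        intros k [Hkp Hka].
        refine (proj1 (ecomb_rel S ar L J j0 A HNA p c (proj2 Hs) (fresh_nb S ar p) _ k (fun _ => pt (A k)) (fun _ => urep (option S) (Ecomb j0 A) J U a k) _ _) _).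
        + intros Hf. exact (proj1 Hs c Hf).
        + rewrite Hka. reflexivity.
        + intros v Hv. exfalso. exact (proj1 Hs v Hv).
        + exact (proj2 (Hk k p Hkp) _). }
    assert (HEq : Th ar L B = Th ar L (Eclass h)).
    { apply functional_extensionality. intros p. apply propositional_extensionality. split.
      - intros Hp. split; [exact (proj1 Hp)|exact (KEY p Hp)].
      - intros [Hs Hm]. destruct (Th_compl B p Hs) as [H|H]; [exact H|].
        exfalso. apply (KEY _ H (fun _ => exist _ a h)). exact (Hm _). }
    exists J, j0, A. split.
    + intros j. rewrite <- (proj1 (HAj j)). exact (proj2_sig j).
    + exists Nu. split.
      * intros p Hp. exact (ult_equiv (option S) (arE ar) (Ecomb j0 A) J U UI US Une Ud (LE L) p Hp).
      * exists a, h. exact HEq.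
Qed.


Definition closedC (C : (form S -> Prop) -> Prop) := forall T, cl C T -> C T.
Definition Iso (C : (form S -> Prop) -> Prop) (T : form S -> Prop) : Prop :=
  C T /\ exists p, T p /\ forall T', C T' -> T' p -> T' = T.

Lemma cl_good G T : cl G T -> good T.
Proof. intros [H _]. exact H. Qed.
Lemma cl_mono G G' T : subset G G' -> cl G T -> cl G' T.
Proof. intros H [H1 H2]. split; auto. intros p Hp. destruct (H2 p Hp) as [T' [HT' HT'p]]. eauto. Qed.

Lemma ClE_eq TT : subset TT good -> ClE ar L TT = cl TT.
Proof.
  intros H. apply functional_extensionality. intros T. apply propositional_extensionality.
  apply ClE_char. exact H.
Qed.

Lemma not_iso C T : C T -> ~ Iso C T -> forall p, T p -> exists T', C T' /\ T' p /\ T' <> T.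
Proof.
  intros HC HI p Hp. apply NNPP. intros H. apply HI. split; auto. exists p. split; auto.
  intros T' HT' HT'p. apply NNPP. intros Hn. apply H. eauto.
Qed.

Lemma sep_closed B T : closedC B -> good T -> ~ B T -> exists q, T q /\ forall T', B T' -> ~ T' q.
Proof.
  intros Hc Hg Hn. apply NNPP. intros H. apply Hn. apply Hc. split; auto.
  intros p Hp. apply NNPP. intros H2. apply H. exists p. split; auto. intros T' HT' HT'p. apply H2. eauto.
Qed.

Lemma lgs_iff C : subset C good -> closedC C ->
  (has_least_gen ar L C <-> forall T, C T -> cl (Iso C) T).
Proof.
  intros Hg Hc.
  assert (HIsoG : subset (Iso C) good) by (intros T [HT _]; auto).
  assert (A2 : forall G T, subset G C -> ClE ar L G = C -> Iso C T -> G T).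
  { intros G T HGC HGeq [HT [p [Hp Hu]]].
    assert (HT' : cl G T) by (rewrite <- (ClE_eq G (fun T H => Hg T (HGC T H))), HGeq; exact HT).
    destruct HT' as [_ HT']. destruct (HT' p Hp) as [T' [HGT' HT'p]].
    rewrite <- (Hu T' (HGC _ HGT') HT'p). exact HGT'. }
  split.
  - intros [G [[HGC HGeq] [Hleast _]]].
    assert (HGI : forall T0, G T0 -> Iso C T0).
    { intros T0 HG0. apply NNPP. intros HnI.
      set (G' := fun T' => G T' /\ T' <> T0).
      assert (HG'C : subset G' C) by (intros T' [H _]; auto).
      assert (HclG : forall T, C T -> cl G T).
      { intros T HT. rewrite <- (ClE_eq G (fun T H => Hg T (HGC T H))), HGeq. exact HT. }
      assert (Sub : forall T1, C T1 -> T1 <> T0 -> forall p, T1 p -> exists T2, G' T2 /\ T2 p).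
      { intros T1 HT1 Hne p Hp.
        destruct (good_sep T1 T0 (Hg _ HT1) (Hg _ (HGC _ HG0)) Hne) as [q [Hq Hnq]].
        destruct (HclG T1 HT1) as [_ Hcl].
        destruct (Hcl (And p q)) as [T2 [HG2 H2]]; [apply good_and; auto; apply Hg; auto|].
        apply (good_and T2 p q (Hg _ (HGC _ HG2))) in H2. destruct H2 as [H2p H2q].
        exists T2. split; auto. split; auto. intros ->. tauto. }
      assert (Hgen : generating ar L C G').
      { split; auto. rewrite (ClE_eq G' (fun T H => Hg T (HG'C T H))).
        apply functional_extensionality. intros T. apply propositional_extensionality. split.
        - intros H. apply Hc. exact (cl_mono G' C T HG'C H).
        - intros HT. split; [apply Hg; auto|]. intros p Hp.
          destruct (classic (T = T0)) as [->|Hne].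
          + destruct (not_iso C T0 (HGC _ HG0) HnI p Hp) as [T3 [HT3 [HT3p Hne3]]].
            exact (Sub T3 HT3 Hne3 p HT3p).
          + exact (Sub T HT Hne p Hp). }
      destruct (Hleast G' Hgen T0 HG0) as [_ H]. exact (H eq_refl). }
    intros T HT. split; [apply Hg; auto|]. intros p Hp.
    assert (HT' : cl G T) by (rewrite <- (ClE_eq G (fun T H => Hg T (HGC T H))), HGeq; exact HT).
    destruct HT' as [_ HT']. destruct (HT' p Hp) as [T' [HGT' HT'p]]. exists T'. auto.
  - intros HD. exists (Iso C).
    assert (Hgen : generating ar L C (Iso C)).
    { split; [intros T [H _]; auto|]. rewrite (ClE_eq _ HIsoG).
      apply functional_extensionality. intros T. apply propositional_extensionality. split.
      - intros H. apply Hc. apply (cl_mono (Iso C) C T); [intros T' [H' _]; auto|exact H].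
      - apply HD. }
    split; [exact Hgen|]. split.
    + intros G' [HG'C HG'eq] T HT. exact (A2 G' T HG'C HG'eq HT).
    + intros G' [HG'C HG'eq] Hsub. apply functional_extensionality. intros T. apply propositional_extensionality.
      split; [apply Hsub|]. intros HT. exact (A2 G' T HG'C HG'eq HT).
Qed.

Lemma cl_union (A B C : (form S -> Prop) -> Prop) : subset A good -> subset B good ->
  (forall T, C T <-> A T \/ B T) -> forall T, cl C T <-> cl A T \/ cl B T.
Proof.
  intros HA HB HC T. split.
  - intros [Hg Hcl]. apply NNPP. intros H.
    assert (H1 : exists p, T p /\ forall T', A T' -> ~ T' p).
    { apply NNPP. intros H1. apply H. left. split; auto. intros p Hp. apply NNPP. intros H2. apply H1.
      exists p. split; auto. intros T' HT' HT'p. apply H2. eauto. }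
    assert (H2 : exists p, T p /\ forall T', B T' -> ~ T' p).
    { apply NNPP. intros H2. apply H. right. split; auto. intros p Hp. apply NNPP. intros H3. apply H2.
      exists p. split; auto. intros T' HT' HT'p. apply H3. eauto. }
    destruct H1 as [p [Hp Hnp]]. destruct H2 as [q [Hq Hnq]].
    destruct (Hcl (And p q)) as [T' [HT' HT'pq]]; [apply good_and; auto|].
    apply HC in HT'. destruct HT' as [HT'|HT'].
    + apply (good_and T' p q (HA _ HT')) in HT'pq. apply (Hnp T' HT'). tauto.
    + apply (good_and T' p q (HB _ HT')) in HT'pq. apply (Hnq T' HT'). tauto.
  - intros [H|H]; revert H; apply cl_mono; intros T' H'; apply HC; auto.
Qed.

Section Split.
Variables (A B C : (form S -> Prop) -> Prop).
Hypotheses (HAg : subset A good) (HBg : subset B good) (HAc : closedC A) (HBc : closedC B)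
  (HC : forall T, C T <-> A T \/ B T)
  (Hint : forall T T', A T -> B T -> A T' -> B T' -> T = T').

Lemma dir1 : (forall T, C T -> cl (Iso C) T) -> forall T, A T -> cl (Iso A) T.
Proof.
  intros H.
  assert (Sub1 : forall T, A T -> ~ B T -> forall p, T p -> exists T'', Iso A T'' /\ T'' p).
  { intros T HT HnB p Hp.
    destruct (sep_closed B T HBc (HAg _ HT) HnB) as [q [Hq Hnq]].
    destruct (H T (proj2 (HC T) (or_introl HT))) as [_ Hcl].
    destruct (Hcl (And p q)) as [T1 [[HC1 [r [Hr Hu]]] H1]]; [apply good_and; auto|].
    assert (HA1 : A T1 /\ ~ B T1).
    { apply HC in HC1. apply (good_and T1 p q) in H1; [|destruct HC1; auto].
      assert (~ B T1) by (intros HB1; exact (Hnq T1 HB1 (proj2 H1))). destruct HC1; tauto. }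
    apply (good_and T1 p q (HAg _ (proj1 HA1))) in H1.
    exists T1. split; [|tauto]. split; [tauto|]. exists r. split; auto.
    intros T' HT' HT'r. apply Hu; auto. apply HC. auto. }
  intros T HT. split; [apply HAg; auto|]. intros p Hp.
  destruct (classic (B T)) as [HB|HnB]; [|exact (Sub1 T HT HnB p Hp)].
  destruct (classic (Iso A T)) as [HI|HnI]; [exists T; auto|].
  destruct (not_iso A T HT HnI p Hp) as [T3 [HT3 [HT3p Hne]]].
  refine (Sub1 T3 HT3 _ p HT3p). intros HB3. apply Hne. apply (Hint T3 T); auto.
Qed.

End Split.

Lemma sub2 (A B C : (form S -> Prop) -> Prop) : subset A good -> subset B good -> closedC B ->
  (forall T, C T <-> A T \/ B T) -> (forall T, A T -> cl (Iso A) T) ->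
  forall T, A T -> ~ B T -> forall p, T p -> exists T'', Iso C T'' /\ T'' p.
Proof.
  intros HAg HBg HBc HC HA T HT HnB p Hp.
  destruct (sep_closed B T HBc (HAg _ HT) HnB) as [q [Hq Hnq]].
  destruct (HA T HT) as [_ Hcl].
  destruct (Hcl (And p q)) as [T1 [[HA1 [r [Hr Hu]]] H1]]; [apply good_and; auto; apply HAg; auto|].
  apply (good_and T1 p q (HAg _ HA1)) in H1.
  exists T1. split; [|tauto]. split; [apply HC; auto|].
  exists (And r q). split; [apply good_and; [apply HAg; auto|tauto]|].
  intros T' HT' HT'rq. apply HC in HT'.
  assert (Hg' : good T') by (destruct HT'; [apply HAg; auto|apply HBg; auto]).
  apply (good_and T' r q Hg') in HT'rq.
  destruct HT' as [HT'|HT'].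
  - apply Hu; tauto.
  - exfalso. apply (Hnq T' HT'). tauto.
Qed.

Lemma dir2 (A B C : (form S -> Prop) -> Prop) : subset A good -> subset B good -> closedC A -> closedC B ->
  (forall T, C T <-> A T \/ B T) ->
  (forall T T', A T -> B T -> A T' -> B T' -> T = T') ->
  (forall T, A T -> cl (Iso A) T) -> (forall T, B T -> cl (Iso B) T) ->
  forall T, C T -> cl (Iso C) T.
Proof.
  intros HAg HBg HAc HBc HC Hint HA HB.
  assert (HC' : forall T, C T <-> B T \/ A T) by (intros T; rewrite HC; tauto).
  intros T HT. assert (Hg : good T) by (apply HC in HT; destruct HT; [apply HAg|apply HBg]; auto).
  split; auto. intros p Hp.
  destruct (classic (B T)) as [HBT|HnB]; [|apply (sub2 A B C HAg HBg HBc HC HA T); auto; apply HC in HT; tauto].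
  destruct (classic (A T)) as [HAT|HnA]; [|apply (sub2 B A C HBg HAg HAc HC' HB T); auto].
  destruct (classic (Iso A T)) as [HIA|HnIA].
  - destruct (classic (Iso B T)) as [HIB|HnIB].
    + exists T. split; auto. split; auto.
      destruct HIA as [_ [pa [Hpa Hua]]]. destruct HIB as [_ [pb [Hpb Hub]]].
      exists (And pa pb). split; [apply good_and; auto|].
      intros T' HT' H'. apply HC in HT'.
      assert (Hg' : good T') by (destruct HT'; [apply HAg|apply HBg]; auto).
      apply (good_and T' pa pb Hg') in H'. destruct HT'; [apply Hua|apply Hub]; tauto.
    + destruct (not_iso B T HBT HnIB p Hp) as [T3 [HT3 [HT3p Hne]]].
      refine (sub2 B A C HBg HAg HAc HC' HB T3 HT3 _ p HT3p). intros HA3. apply Hne. apply (Hint T3 T); auto.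
  - destruct (not_iso A T HAT HnIA p Hp) as [T3 [HT3 [HT3p Hne]]].
    refine (sub2 A B C HAg HBg HBc HC HA T3 HT3 _ p HT3p). intros HB3. apply Hne. apply (Hint T3 T); auto.
Qed.

Lemma cl_closed G : closedC G -> True.
Proof. auto. Qed.
Lemma cl_cl G : closedC (cl G).
Proof.
  intros T [Hg H]. split; auto. intros p Hp. destruct (H p Hp) as [T' [[_ H'] HT'p]]. apply H'. exact HT'p.
Qed.
End Char.

Lemma syms_iterEx (S : Type) k : forall p : form S, syms S (iterEx k p) = syms S p.
Proof. induction k; simpl; intros p; auto. rewrite IHk. reflexivity. Qed.

Lemma uses_True (S : Type) (p : form S) : uses (fun _ => True) p.
Proof. induction p; simpl; auto. Qed.

Section Concrete.
Variables (S0 : Type) (ar0 : S0 -> nat) (T0 : form S0 -> Prop) (n : nat)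
  (D : Type) (d : D) (r0 : S0 -> list D -> Prop).
Hypotheses (Hn : 1 <= n)
  (HM0 : forall q, T0 q -> models ar0 (Structure d r0) q)
  (Hcompl : forall p, Sent ar0 (fun _ => True) p -> T0 p \/ T0 (Neg p)).

Definition M0 : structure S0 := Structure d r0.
Definition II0 := I0 ar0 T0 n.
Definition Sig := Sigma' ar0 T0 n.
Definition Z0 : S0 -> Prop := fun s => r0 s [].
Definition MI (I : S0 -> Prop) : structure S0 :=
  Structure d (fun s l => ~ (II0 s /\ ~ I s) /\ r0 s l).

Lemma M0_exR l : II0 l -> models ar0 M0 (exR ar0 l).
Proof. intros [_ H]. apply H. exact HM0. Qed.

Lemma MI_exR I l : II0 l -> (models ar0 (MI I) (exR ar0 l) <-> I l).
Proof.
  intros Hl. split.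
  - intros H. destruct (sat_exR S0 ar0 _ _ _ (H (fun _ => d))) as [ls [H1 _]].
    apply NNPP. intros Hn'. apply H1. auto.
  - intros HI e. apply (sat_rel S0 ar0 D d r0).
    + intros s Hs l'. unfold exR in Hs. rewrite syms_iterEx in Hs. simpl in Hs.
      destruct Hs as [<-|[]]. split; [intros H; split; auto; tauto|tauto].
    + apply (M0_exR l Hl).
Qed.

Definition Ax (I : S0 -> Prop) (q : form S0) : Prop :=
  (T0 q /\ uses (fun s => ar0 s <> n \/ I s) q) \/
  (exists l, II0 l /\ ~ I l /\ q = Neg (exR ar0 l)).

Lemma MI_Ax I q : Ax I q -> models ar0 (MI I) q.
Proof.
  intros [[H1 H2]|[l [Hl [HnI ->]]]].
  - intros e. apply (sat_rel S0 ar0 D d r0).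
    + intros s Hs ls. apply (uses_syms S0 _ _ H2) in Hs. split.
      * intros H. split; auto. intros [[Ha _] HnI]. destruct Hs; tauto.
      * tauto.
    + apply (HM0 q H1).
  - intros e H. destruct (sat_exR S0 ar0 _ _ _ H) as [ls [H1 _]]. tauto.
Qed.

Lemma TI_MI I p : T_I ar0 T0 n I p -> models ar0 (MI I) p.
Proof. intros [_ H]. apply H. intros q Hq. apply MI_Ax. exact Hq. Qed.

Fixpoint strip (I : S0 -> Prop) (p : form S0) : form S0 :=
  match p with
  | Rel s f => if excluded_middle_informative (II0 s /\ ~ I s) then Neg (top S0) else Rel s f
  | Eqv x y => Eqv x y
  | Neg q => Neg (strip I q)
  | And q r => And (strip I q) (strip I r)
  | Ex x q => Ex x (strip I q)
  end.

Lemma strip_free I p v : free ar0 (strip I p) v -> free ar0 p v.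
Proof.
  induction p; simpl; auto.
  - destruct (excluded_middle_informative _); simpl; auto. intros [H1 [H2|H2]]; congruence.
  - intros [H|H]; auto.
  - intros [H1 H2]; auto.
Qed.

Lemma strip_uses I p : uses Sig p -> uses (fun s => ar0 s <> n \/ I s) (strip I p).
Proof.
  induction p; simpl; auto.
  - destruct (excluded_middle_informative _) as [Hx|Hx]; simpl; auto. unfold Sig, Sigma'.
    intros [H|H]; auto. right. apply NNPP. intros H'. apply Hx. split; auto.
  - intros [H1 H2]; auto.
Qed.

Lemma strip_sat I (M : structure S0)
  (HM : forall s (g : nat -> dom M), II0 s -> ~ I s -> ~ rel M s (map g (seq 0 (ar0 s)))) :
  forall p e, sat ar0 M e p <-> sat ar0 M e (strip I p).
Proof.
  induction p; simpl; intros e.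
  - destruct (excluded_middle_informative _) as [[H1 H2]|H]; simpl.
    + split; [intros H; exfalso; exact (HM s _ H1 H2 H)|intros H; exfalso; apply H; exists (pt M); auto].
    + tauto.
  - tauto.
  - rewrite IHp. tauto.
  - rewrite IHp1, IHp2. tauto.
  - split; intros [x Hx]; exists x; apply IHp; auto.
Qed.

Lemma TI_eq I : T_I ar0 T0 n I = Th ar0 Sig (MI I).
Proof.
  apply functional_extensionality. intros p. apply propositional_extensionality. split.
  - intros H. split; [exact (proj1 H)|apply TI_MI; auto].
  - intros [Hs Hm]. split; [exact Hs|]. intros M HM.
    assert (HMI : forall s (g : nat -> dom (MI I)), II0 s -> ~ I s -> ~ rel (MI I) s (map g (seq 0 (ar0 s)))).
    { intros s g H1 H2 [H3 _]. auto. }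
    assert (HMM : forall s (g : nat -> dom M), II0 s -> ~ I s -> ~ rel M s (map g (seq 0 (ar0 s)))).
    { intros s g H1 H2 H3. apply (HM (Neg (exR ar0 s))) with (env := g); [right; exists s; auto|].
      apply (sat_exR_intro S0 ar0 M g s g). exact H3. }
    assert (Hst : Sent ar0 (fun _ => True) (strip I p)).
    { split; [intros v Hv; apply (proj1 Hs v); apply (strip_free I p v Hv)|apply uses_True]. }
    assert (Hm0 : models ar0 M0 (strip I p)).
    { intros e. apply (sat_rel S0 ar0 D d (fun s l => ~ (II0 s /\ ~ I s) /\ r0 s l) r0).
      - intros s Hs' ls. apply (uses_syms S0 _ _ (strip_uses I p (proj2 Hs))) in Hs'.
        split; [tauto|]. intros H. split; auto. unfold II0, I0. intros [[Ha _] HnI]. destruct Hs'; tauto.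
      - apply (proj1 (strip_sat I (MI I) HMI p e)). apply Hm. }
    assert (HT0p : T0 (strip I p)).
    { destruct (Hcompl _ Hst) as [H|H]; auto. exfalso.
      apply (proj1 (models_neg S0 ar0 M0 _ _ Hst) (HM0 _ H)). exact Hm0. }
    intros e. apply (proj2 (strip_sat I M HMM p e)). apply HM. left. split; auto.
    apply strip_uses. exact (proj2 Hs).
Qed.

Lemma TI_good I : good S0 ar0 Sig Z0 (T_I ar0 T0 n I).
Proof.
  exists (MI I). split; [apply TI_eq|]. intros s _ H0. simpl. unfold Z0. split; [tauto|].
  intros H. split; auto. intros [[H1 _] _]. lia.
Qed.

Lemma TG_good G : subset (T_G ar0 T0 n G) (good S0 ar0 Sig Z0).
Proof. intros T [I [_ ->]]. apply TI_good. Qed.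
End Concrete.

Section Final.
Variables (S0 : Type) (ar0 : S0 -> nat) (T0 : form S0 -> Prop) (n : nat)
  (D : Type) (d : D) (r0 : S0 -> list D -> Prop).
Hypotheses (Hn : 1 <= n)
  (HM0 : forall q, T0 q -> models ar0 (Structure d r0) q)
  (Hcompl : forall p, Sent ar0 (fun _ => True) p -> T0 p \/ T0 (Neg p)).

Let L := Sigma' ar0 T0 n.
Let Z := Z0 S0 D r0.
Let CL (X : (S0 -> Prop) -> Prop) := cl S0 ar0 L Z (T_G ar0 T0 n X).

Lemma models_and (M : structure S0) p q : models ar0 M (And p q) -> models ar0 M p /\ models ar0 M q.
Proof. intros H. split; intros e; apply (H e). Qed.

Lemma gand (T : form S0 -> Prop) a b : good S0 ar0 L Z T -> T a -> T b -> T (And a b).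
Proof. intros Hg Ha Hb. apply (proj2 (good_and S0 ar0 L Z T a b Hg)). auto. Qed.

Lemma exR_trans (Fm Fp : (S0 -> Prop) -> Prop) (Hcut : forall I I', Fm I -> Fp I' -> set_incl I I')
  T T' l : II0 S0 ar0 T0 n l -> CL Fm T -> CL Fp T' -> T (exR ar0 l) -> T' (exR ar0 l).
Proof.
  intros Hl [HgT HT] [HgT' HT'] H. apply NNPP. intros Hn'.
  assert (Hs : Sent ar0 L (exR ar0 l)) by (apply sent_exR; right; exact Hl).
  destruct (good_compl S0 ar0 L Z T' _ HgT' Hs) as [H1|H1]; [tauto|].
  destruct (HT _ H) as [T1 [[I [HI ->]] H2]]. destruct (HT' _ H1) as [T2 [[I' [HI' ->]] H3]].
  apply (TI_MI S0 ar0 T0 n D d r0 HM0) in H2. apply (TI_MI S0 ar0 T0 n D d r0 HM0) in H3.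
  apply (MI_exR S0 ar0 T0 n D d r0 HM0 I l Hl) in H2.
  apply (models_neg S0 ar0 _ L _ Hs) in H3.
  apply H3. apply (MI_exR S0 ar0 T0 n D d r0 HM0 I' l Hl). exact (Hcut I I' HI HI' l H2).
Qed.

Lemma build T T' : good S0 ar0 L Z T -> good S0 ar0 L Z T' ->
  (forall l, II0 S0 ar0 T0 n l -> (T (exR ar0 l) <-> T' (exR ar0 l))) ->
  forall K, exists chi, T chi /\ T' chi /\ forall I, models ar0 (MI S0 ar0 T0 n D d r0 I) chi ->
    forall l, In l K -> II0 S0 ar0 T0 n l -> (I l <-> T (exR ar0 l)).
Proof.
  intros HgT HgT' Heq K. induction K as [|l K IH].
  - exists (top S0). split; [apply (good_top S0 ar0 L Z); auto|]. split; [apply (good_top S0 ar0 L Z); auto|].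
    intros I _ l [].
  - destruct IH as [chi [H1 [H2 H3]]].
    destruct (classic (II0 S0 ar0 T0 n l)) as [Hl|Hnl].
    + assert (Hs : Sent ar0 L (exR ar0 l)) by (apply sent_exR; right; exact Hl).
      destruct (classic (T (exR ar0 l))) as [He|Hne].
      * exists (And chi (exR ar0 l)). split; [apply gand; auto|].
        split; [apply gand; auto; apply Heq; auto|].
        intros I HI l' [<-|Hl'] Hl0; apply models_and in HI; destruct HI as [HI1 HI2].
        -- split; auto. intros _. apply (MI_exR S0 ar0 T0 n D d r0 HM0 I l Hl0). exact HI2.
        -- apply H3; auto.
      * assert (HnT : T (Neg (exR ar0 l))) by (destruct (good_compl S0 ar0 L Z T _ HgT Hs); tauto).
        assert (HnT' : T' (Neg (exR ar0 l))).
        { destruct (good_compl S0 ar0 L Z T' _ HgT' Hs) as [H|H]; auto. exfalso. apply Hne. apply Heq; auto. }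
        exists (And chi (Neg (exR ar0 l))). split; [apply gand; auto|].
        split; [apply gand; auto|].
        intros I HI l' [<-|Hl'] Hl0; apply models_and in HI; destruct HI as [HI1 HI2].
        -- split; [|tauto]. intros HIl. apply (models_neg S0 ar0 _ L _ Hs) in HI2. exfalso. apply HI2.
           apply (MI_exR S0 ar0 T0 n D d r0 HM0 I l Hl0). exact HIl.
        -- apply H3; auto.
    + exists chi. split; auto. split; auto. intros I HI l' [<-|Hl'] Hl0; [tauto|]. apply H3; auto.
Qed.

Lemma inter (Fm Fp : (S0 -> Prop) -> Prop) (Hcut : forall I I', Fm I -> Fp I' -> set_incl I I')
  T T' : CL Fm T -> CL Fp T -> CL Fm T' -> CL Fp T' -> T = T'.
Proof.
  intros HmT HpT HmT' HpT'. apply NNPP. intros Hne.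
  assert (HgT := cl_good S0 ar0 L Z _ T HmT). assert (HgT' := cl_good S0 ar0 L Z _ T' HmT').
  destruct (good_sep S0 ar0 L Z T T' HgT HgT' Hne) as [phi [Hphi Hnphi]].
  assert (Hs : Sent ar0 L phi) by exact (good_sent S0 ar0 L Z T phi HgT Hphi).
  assert (HnT' : T' (Neg phi)) by (destruct (good_compl S0 ar0 L Z T' _ HgT' Hs); tauto).
  assert (Heq : forall l, II0 S0 ar0 T0 n l -> (T (exR ar0 l) <-> T' (exR ar0 l))).
  { intros l Hl. split; apply (exR_trans Fm Fp Hcut); auto. }
  destruct (build T T' HgT HgT' Heq (syms S0 phi)) as [chi [H1 [H2 H3]]].
  destruct (proj2 HmT (And phi chi)) as [T1 [[I [HI ->]] HT1]]; [apply gand; auto|].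
  destruct (proj2 HmT' (And (Neg phi) chi)) as [T2 [[I' [HI' ->]] HT2]]; [apply gand; auto|].
  apply (TI_MI S0 ar0 T0 n D d r0 HM0) in HT1. apply (TI_MI S0 ar0 T0 n D d r0 HM0) in HT2.
  apply models_and in HT1. apply models_and in HT2. destruct HT1 as [HT1a HT1b]. destruct HT2 as [HT2a HT2b].
  assert (Hag : forall s, In s (syms S0 phi) -> forall ls,
    (~ (II0 S0 ar0 T0 n s /\ ~ I s) /\ r0 s ls) <-> (~ (II0 S0 ar0 T0 n s /\ ~ I' s) /\ r0 s ls)).
  { intros s Hs' ls. destruct (classic (II0 S0 ar0 T0 n s)) as [Hl|Hnl]; [|tauto].
    assert (E1 := H3 I HT1b s Hs' Hl). assert (E2 := H3 I' HT2b s Hs' Hl). tauto. }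
  apply (models_neg S0 ar0 _ L _ Hs) in HT2a. apply HT2a.
  intros e. apply (sat_rel S0 ar0 D d _ _ phi Hag). apply HT1a.
Qed.
End Final.

Theorem corollary4p15 (S0 : Type) (ar0 : S0 -> nat) (T0 : form S0 -> Prop) (n : nat)
  (HT0 : complete_theory ar0 (fun _ => True) T0)
  (HLU : LU ar0 T0)
  (Hn : 1 <= n)
  (HI0 : infinite (I0 ar0 T0 n))
  (F Fm Fp : (S0 -> Prop) -> Prop)
  (HF : forall I, F I -> index_set ar0 T0 n I)
  (HFinf : infinite_family F)
  (HFlin : linear_family F)
  (HFgap : infinite_gaps F)
  (Hcut : is_cut F Fm Fp) :
  has_least_gen ar0 (Sigma' ar0 T0 n) (ClE ar0 (Sigma' ar0 T0 n) (T_G ar0 T0 n F)) <->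
  (has_least_gen ar0 (Sigma' ar0 T0 n) (ClE ar0 (Sigma' ar0 T0 n) (T_G ar0 T0 n Fm)) /\
   has_least_gen ar0 (Sigma' ar0 T0 n) (ClE ar0 (Sigma' ar0 T0 n) (T_G ar0 T0 n Fp))).
Proof.
  destruct HT0 as [_ [[M HM] [_ Hcompl]]]. destruct M as [D d r0].
  destruct Hcut as [HFeq [_ [_ [_ Hincl]]]].
  assert (Hsub : forall I I', Fm I -> Fp I' -> set_incl I I') by (intros I I' H1 H2; exact (proj1 (Hincl I I' H1 H2))).
  set (L := Sigma' ar0 T0 n). set (Z := Z0 S0 D r0).
  assert (HG : forall X, subset (T_G ar0 T0 n X) (good S0 ar0 L Z)) by (intros X; exact (TG_good S0 ar0 T0 n D d r0 Hn HM Hcompl X)).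
  rewrite !(ClE_eq S0 ar0 L Z _ (HG _)).
  assert (HCg : forall X, subset (cl S0 ar0 L Z (T_G ar0 T0 n X)) (good S0 ar0 L Z)) by (intros X T; apply cl_good).
  rewrite !(lgs_iff S0 ar0 L Z _ (HCg _) (cl_cl S0 ar0 L Z _)).
  assert (HC : forall T, cl S0 ar0 L Z (T_G ar0 T0 n F) T <-> cl S0 ar0 L Z (T_G ar0 T0 n Fm) T \/ cl S0 ar0 L Z (T_G ar0 T0 n Fp) T).
  { apply (cl_union S0 ar0 L Z _ _ _ (HG _) (HG _)). intros T. unfold T_G. split.
    - intros [I [HI ->]]. apply HFeq in HI. destruct HI; [left|right]; eauto.
    - intros [[I [HI ->]]|[I [HI ->]]]; exists I; split; auto; apply HFeq; auto. }
  assert (HC' : forall T, cl S0 ar0 L Z (T_G ar0 T0 n F) T <-> cl S0 ar0 L Z (T_G ar0 T0 n Fp) T \/ cl S0 ar0 L Z (T_G ar0 T0 n Fm) T).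
  { intros T. rewrite HC. tauto. }
  assert (Hint : forall T T', cl S0 ar0 L Z (T_G ar0 T0 n Fm) T -> cl S0 ar0 L Z (T_G ar0 T0 n Fp) T ->
     cl S0 ar0 L Z (T_G ar0 T0 n Fm) T' -> cl S0 ar0 L Z (T_G ar0 T0 n Fp) T' -> T = T').
  { intros T T' H1 H2 H3 H4. exact (inter S0 ar0 T0 n D d r0 HM Fm Fp Hsub T T' H1 H2 H3 H4). }
  assert (Hint' : forall T T', cl S0 ar0 L Z (T_G ar0 T0 n Fp) T -> cl S0 ar0 L Z (T_G ar0 T0 n Fm) T ->
     cl S0 ar0 L Z (T_G ar0 T0 n Fp) T' -> cl S0 ar0 L Z (T_G ar0 T0 n Fm) T' -> T = T').
  { intros T T' H1 H2 H3 H4. apply Hint; auto. }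
  split.
  - intros H. split.
    + exact (dir1 S0 ar0 L Z _ _ _ (HCg _) (HCg _) (cl_cl S0 ar0 L Z _) HC Hint H).
    + exact (dir1 S0 ar0 L Z _ _ _ (HCg _) (HCg _) (cl_cl S0 ar0 L Z _) HC' Hint' H).
  - intros [H1 H2]. exact (dir2 S0 ar0 L Z _ _ _ (HCg _) (HCg _) (cl_cl S0 ar0 L Z _) (cl_cl S0 ar0 L Z _) HC Hint H1 H2).
Qed.
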